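(* Let $d\ge2$ and $\Phi_t:\mathbb M_d\to\mathbb M_d$, $\Phi_t(X)=\mathrm{Tr}(X)I_d-tX$, $t\in\mathbb R$. For $\alpha\in[1,d]$ with $\alpha=k+\theta$, $k=\lfloor\alpha\rfloor$, $\theta\in[0,1)$, let $t^\ast_\alpha:=\frac{k+\theta^2}{(k+\theta)^2}$. Then: (i) if $t\le0$, $\Phi_t$ is completely positive and $\tau(\Phi_t)=d$; (ii) if $0<t\le\frac1d$, $\Phi_t$ is completely positive and $\tau(\Phi_t)=d$; (iii) if $\frac1d<t<1$, then $\tau(\Phi_t)$ is the unique $\alpha\in(1,d)$ with $t=t^\ast_\alpha$; more explicitly, if $t\in(\frac1{k+1},\frac1k]$ for some $k\in\{1,\dots,d-1\}$, then $\tau(\Phi_t)=k+\theta(t)$ where $\theta(t)\in[0,1)$ is the unique solution in $[0,1)$ of $(t-1)\theta^2+2tk\theta+(tk^2-k)=0$; equivalently, for $t\in(\frac1{k+1},\frac1k)$, $\theta(t)=\frac{tk-\sqrt{k(t(k+1)-1)}}{1-t}$; and at $t=\frac1k$, $\theta(t)=0$, so $\tau(\Phi_{1/k})=k$; (iv) $\tau(\Phi_1)=1$.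
   Context: The Choi matrix of a linear $\Phi:\mathbb M_d\to\mathbb M_d$ is $C_\Phi=\sum_{i,j}E_{ij}\otimes\Phi(E_{ij})$. Schmidt coefficients $s_1(\psi)\ge\dots\ge s_d(\psi)\ge0$ of $\psi=\sum a_{ij}e_i\otimes e_j$ are the singular values of $[a_{ij}]$. For $\alpha\in[1,d]$ with $k=\lfloor\alpha\rfloor$, $\theta=\alpha-k$, $r=\lceil\alpha\rceil$, a unit vector $\psi$ is $\alpha$-admissible if $s_j(\psi)=0$ for $j\ge r+1$ and, when $\theta>0$, $s_{k+1}(\psi)\le\frac\theta k\sum_{j=1}^ks_j(\psi)$; $\mathcal V_\alpha$ is the set of these. A Hermitian-preserving $\Phi$ is in $\mathsf P_\alpha$ if $\langle\psi,C_\Phi\psi\rangle\ge0$ for all $\psi\in\mathcal V_\alpha$. For a Hermitian-preserving $\Phi\in\mathsf P_1$, the stability index is $\tau(\Phi):=\sup\{\alpha\in[1,d]:\Phi\in\mathsf P_\alpha\}$. *)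

(* Defs.v *)
From HB Require Import structures.
From mathcomp Require Import all_boot all_order all_algebra.
From mathcomp Require Import complex.
From mathcomp Require Import classical_sets reals.

Set Implicit Arguments.
Unset Strict Implicit.
Unset Printing Implicit Defensive.

Import Order.TTheory GRing.Theory Num.Theory.
Local Open Scope ring_scope.
Local Open Scope classical_set_scope.
Local Open Scope sesquilinear_scope.

Section ChoiDefs.
Variable R : realType.
Local Notation C := R[i].
Variable d : nat.

Definition Emx (i j : 'I_d) : 'M[C]_d := delta_mx i j.

(* Choi matrix C_Phi = \sum_{i,j} E_ij (x) Phi(E_ij), indexed by pairs:
   C_Phi((i,k),(j,l)) = Phi(E_ij)_{k l}; vectors of C^d (x) C^d are
   functions psi : 'I_d * 'I_d -> C with psi (i,k) the coefficient of
   e_i (x) e_k. *)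
Definition choi (Phi : 'M[C]_d -> 'M[C]_d) (p q : 'I_d * 'I_d) : C :=
  Phi (Emx p.1 q.1) p.2 q.2.

Definition choi_form (Phi : 'M[C]_d -> 'M[C]_d) (psi : 'I_d * 'I_d -> C) : C :=
  \sum_p \sum_q (psi p)^* * choi Phi p q * psi q.

Definition unit_vector (psi : 'I_d * 'I_d -> C) : Prop :=
  \sum_p (psi p)^* * psi p = 1.

Definition coef_mx (psi : 'I_d * 'I_d -> C) : 'M[C]_d := \matrix_(i, j) psi (i, j).

(* s (0-based: s j = s_{j+1}) is the non-increasing list of singular values
   of A, i.e. the diagonal of a singular value decomposition A = U diag(s) V. *)
Definition singular_values (A : 'M[C]_d) (s : 'I_d -> R) : Prop :=
  (forall j, 0 <= s j) /\
  (forall i j : 'I_d, (i <= j)%N -> s j <= s i) /\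
  exists U V : 'M[C]_d,
    U \is unitarymx /\ V \is unitarymx /\
    A = U *m diag_mx (\row_j (s j)%:C%C) *m V.

Definition floor_nat (alpha : R) : nat := Num.truncn alpha.
Definition frac_part (alpha : R) : R := alpha - (floor_nat alpha)%:R.
Definition ceil_nat (alpha : R) : nat :=
  if 0 < frac_part alpha then (floor_nat alpha).+1 else floor_nat alpha.

Definition admissible (alpha : R) (psi : 'I_d * 'I_d -> C) : Prop :=
  let k := floor_nat alpha in
  let theta := frac_part alpha in
  let r := ceil_nat alpha in
  unit_vector psi /\
  exists s, singular_values (coef_mx psi) s /\
    (forall j : 'I_d, (r <= j)%N -> s j = 0) /\
    (0 < theta -> forall j : 'I_d, nat_of_ord j = k ->
        s j <= theta / k%:R * \sum_(i : 'I_d | (i < k)%N) s i).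

Definition hermitian_preserving (Phi : 'M[C]_d -> 'M[C]_d) : Prop :=
  forall X : 'M[C]_d, Phi (X ^t*) = (Phi X) ^t*.

Definition in_P (alpha : R) (Phi : 'M[C]_d -> 'M[C]_d) : Prop :=
  hermitian_preserving Phi /\
  forall psi, admissible alpha psi -> 0 <= choi_form Phi psi.

Definition tau (Phi : 'M[C]_d -> 'M[C]_d) : R :=
  sup [set alpha : R | 1 <= alpha <= d%:R /\ in_P alpha Phi].

Definition psd_block (n : nat) (X : 'I_n -> 'I_n -> 'M[C]_d) : Prop :=
  forall u : 'I_n -> 'cV[C]_d,
    0 <= \sum_p \sum_q ((u p) ^t* *m X p q *m u q) 0 0.

(* complete positivity: id_n (x) Phi is positive for every n *)
Definition completely_positive (Phi : 'M[C]_d -> 'M[C]_d) : Prop :=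
  forall (n : nat) (X : 'I_n -> 'I_n -> 'M[C]_d),
    psd_block X -> psd_block (fun p q => Phi (X p q)).

Definition Phi_t (t : R) (X : 'M[C]_d) : 'M[C]_d :=
  (\tr X) *: 1%:M - (t%:C)%C *: X.

End ChoiDefs.

Definition tstar (R : realType) (alpha : R) : R :=
  ((floor_nat alpha)%:R + frac_part alpha ^+ 2) /
  ((floor_nat alpha)%:R + frac_part alpha) ^+ 2.

(* Main.v *)
Require Import Defs.
From HB Require Import structures.
From mathcomp Require Import all_boot all_order all_algebra.
From mathcomp Require Import complex.
From mathcomp Require Import classical_sets reals.
From mathcomp Require Import lra ring.
Import Order.TTheory GRing.Theory Num.Theory.
Local Open Scope ring_scope.
Local Open Scope sesquilinear_scope.

Section Real.
Variable R : realType.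
Implicit Types (a b t th : R).

Lemma fracE a : a = (floor_nat a)%:R + frac_part a.
Proof. by rewrite /frac_part addrC subrK. Qed.

Lemma frac_itv a : 0 <= a -> 0 <= frac_part a < 1.
Proof.
move=> a0; have /andP[h1 h2] := truncn_itv a0.
rewrite -natr1 in h2; rewrite /frac_part /floor_nat; lra.
Qed.

Lemma floor_natD (k : nat) th : 0 <= th < 1 -> floor_nat (k%:R + th) = k.
Proof.
move=> /andP[h0 h1]; rewrite /floor_nat truncnD ?natr_nat //.
  by rewrite natrK (_ : Num.truncn th = 0%N) ?addn0 //; apply/truncn0Pn; rewrite -ltNge.
Qed.

Lemma frac_natD (k : nat) th : 0 <= th < 1 -> frac_part (k%:R + th) = th.
Proof. by move=> h; rewrite /frac_part floor_natD // addrC addKr. Qed.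

Lemma tstar_kth (k : nat) th : 0 <= th < 1 ->
  tstar (k%:R + th) = (k%:R + th ^+ 2) / (k%:R + th) ^+ 2.
Proof. by move=> h; rewrite /tstar floor_natD // frac_natD. Qed.

Lemma floor_ge1 a : 1 <= a -> (1 <= floor_nat a)%N.
Proof. by move=> h; rewrite /floor_nat truncn_gt0. Qed.

Lemma lt_frac a b c e : 0 < b -> 0 < e -> (a / b < c / e) = (a * e < c * b).
Proof. by move=> hb he; rewrite ltr_pdivrMr // mulrAC ltr_pdivlMr. Qed.
Lemma le_frac a b c e : 0 < b -> 0 < e -> (a / b <= c / e) = (a * e <= c * b).
Proof. by move=> hb he; rewrite ler_pdivrMr // mulrAC ler_pdivlMr. Qed.

Lemma g_gt (k : nat) th : (1 <= k)%N -> 0 <= th < 1 ->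
  1 / k.+1%:R < (k%:R + th ^+ 2) / (k%:R + th) ^+ 2.
Proof.
move=> k1 /andP[h0 h1]; have kR : 1 <= k%:R :> R by rewrite ler1n.
rewrite lt_frac ?ltr0n //; last by apply: exprn_gt0; lra.
rewrite mul1r -natr1 -subr_gt0.
have -> : (k%:R + th ^+ 2) * (k%:R + 1) - (k%:R + th) ^+ 2 = k%:R * (1 - th) ^+ 2 by ring.
by apply: mulr_gt0; [lra| apply: exprn_gt0; lra].
Qed.

Lemma g_le (k : nat) th : (1 <= k)%N -> 0 <= th < 1 ->
  (k%:R + th ^+ 2) / (k%:R + th) ^+ 2 <= 1 / k%:R.
Proof.
move=> k1 /andP[h0 h1]; have kR : 1 <= k%:R :> R by rewrite ler1n.
rewrite le_frac; [|by apply: exprn_gt0; lra|lra].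
rewrite mul1r -subr_ge0.
have -> : (k%:R + th) ^+ 2 - (k%:R + th ^+ 2) * k%:R = th * (2 * k%:R - (k%:R - 1) * th) by ring.
by apply: mulr_ge0; nra.
Qed.

Lemma g_lt_same (k : nat) th ph : (1 <= k)%N -> 0 <= th -> th < ph -> ph < 1 ->
  (k%:R + ph ^+ 2) / (k%:R + ph) ^+ 2 < (k%:R + th ^+ 2) / (k%:R + th) ^+ 2.
Proof.
move=> k1 h0 h1 h2; have kR : 1 <= k%:R :> R by rewrite ler1n.
rewrite lt_frac; [|by apply: exprn_gt0; lra|by apply: exprn_gt0; lra].
have e : (k%:R + th ^+ 2) * (k%:R + ph) ^+ 2 - (k%:R + ph ^+ 2) * (k%:R + th) ^+ 2
   = k%:R * (ph - th) * (2 * k%:R - (k%:R - 1) * (ph + th) - 2 * th * ph) by ring.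
rewrite -subr_gt0 e; apply: mulr_gt0; first by nra.
nra.
Qed.

Lemma tstar_lt a b : 1 <= a -> a < b -> tstar b < tstar a.
Proof.
move=> a1 ab.
have a0 : 0 <= a by lra.  have b0 : 0 <= b by lra.
have ha := frac_itv _ a0; have hb := frac_itv _ b0.
have ka := floor_ge1 _ a1; have kb : (1 <= floor_nat b)%N by apply: floor_ge1; lra.
rewrite /tstar.
have : (floor_nat a <= floor_nat b)%N by apply: le_truncn; lra.
rewrite leq_eqVlt => /orP[/eqP e|lt].
  have fa : frac_part a < frac_part b.
    have := fracE a; have := fracE b; rewrite -e; lra.
  case/andP: ha => ha0 ha1; case/andP: hb => hb0 hb1.
  by rewrite -e; apply: g_lt_same.
apply: (le_lt_trans (g_le _ _ kb hb)); apply: le_lt_trans (g_gt _ _ ka ha).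
have : (floor_nat a).+1%:R <= (floor_nat b)%:R :> R by rewrite ler_nat.
move=> h; rewrite le_frac ?ltr0n //; first by rewrite !mul1r.
Qed.

Lemma tstar_nat (k : nat) : (1 <= k)%N -> tstar (k%:R : R) = 1 / k%:R.
Proof.
move=> k1; rewrite -[k%:R]addr0 tstar_kth ?lexx ?ltr01 // expr0n /= !addr0.
have : k%:R != 0 :> R by rewrite pnatr_eq0 -lt0n.
by move=> nz; field.
Qed.

Lemma tstar1 : tstar (1 : R) = 1.
Proof. by have := tstar_nat 1 isT; rewrite divr1. Qed.

End Real.
Section Mx.
Variable R : realType.
Local Notation C := R[i].
Variable d : nat.

Lemma choi_Phi_t (t : R) (p q : 'I_d * 'I_d) :
  choi (@Phi_t R d t) p q =
  (p == q)%:R - (t%:C)%C * ((p.2 == p.1)%:R * (q.2 == q.1)%:R).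
Proof.
rewrite /choi /Phi_t /Emx !mxE /mxtrace.
rewrite (bigD1 p.1) //= big1 ?addr0; last first.
  by move=> i /negbTE ne; rewrite mxE ne.
rewrite !mxE eqxx /=.
case: p q => [a b] [c e] /=.
rewrite xpair_eqE.
by case: (a == c); case: (b == e); case: (b == a); case: (e == c);
  rewrite /= ?(mulr1, mul1r, mulr0, mul0r).
Qed.



Lemma sum_diag (F : 'I_d * 'I_d -> C) :
  \sum_p (p.2 == p.1)%:R * F p = \sum_i F (i, i).
Proof.
rewrite (eq_bigr (fun p => (fun i j => (j == i)%:R * F (i, j)) p.1 p.2)); last by case.
rewrite -(pair_bigA _ (fun i j => (j == i)%:R * F (i, j))) /=; apply: eq_bigr => i _.
rewrite (bigD1 i) //= eqxx mul1r big1 ?addr0 // => j /negbTE ->; by rewrite mul0r.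
Qed.

Lemma choi_form_Phi_t (t : R) (psi : 'I_d * 'I_d -> C) :
  choi_form (@Phi_t R d t) psi =
  \sum_p (psi p)^* * psi p - (t%:C)%C * ((\sum_i psi (i, i))^* * \sum_i psi (i, i)).
Proof.
rewrite /choi_form.
under eq_bigr => p _ do under eq_bigr => q _ do rewrite choi_Phi_t mulrBr mulrBl.
under eq_bigr => p _ do rewrite sumrB.
rewrite sumrB; congr (_ - _).
  apply: eq_bigr => p _; rewrite (bigD1 p) //= eqxx mulr1 big1 ?addr0 //.
  by move=> q; rewrite eq_sym => /negbTE ->; rewrite mulr0 mul0r.
transitivity ((t%:C)%C * ((\sum_p (p.2 == p.1)%:R * (psi p)^*) *
   (\sum_q (q.2 == q.1)%:R * psi q))).
  rewrite mulr_suml mulr_sumr; apply: eq_bigr => p _.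
  rewrite mulr_sumr mulr_sumr; apply: eq_bigr => q _; ring.
by rewrite !sum_diag rmorph_sum.
Qed.


Lemma diagE (s : 'I_d -> R) (i j : 'I_d) :
  diag_mx (\row_j ((s j)%:C)%C) i j = ((s i)%:C)%C *+ (i == j).
Proof. by rewrite !mxE. Qed.

Lemma conj_realC (x : R) : ((x%:C)%C)^* = (x%:C)%C.
Proof.
apply: conj_Creal; rewrite realE ler0c -[0 : C]/(((0 : R)%:C)%C) lecR.
exact: le_total.
Qed.

Lemma trDDt (s : 'I_d -> R) :
  \tr (diag_mx (\row_j ((s j)%:C)%C) *m (diag_mx (\row_j ((s j)%:C)%C))^t*)
  = ((\sum_j s j ^+ 2)%:C)%C.
Proof.
rewrite rmorph_sum /mxtrace; apply: eq_bigr => i _.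
rewrite !mxE (bigD1 i) //= big1 ?addr0.
  by rewrite !mxE !eqxx !mulr1n conj_realC rmorphXn /= expr2.
by move=> j /negbTE nj; rewrite !mxE eq_sym nj mulr0n mul0r.
Qed.

Lemma unitary_tK (U : 'M[C]_d) : U \is unitarymx -> U^t* *m U = 1%:M.
Proof.
move=> hU; rewrite -trmxC_unitary in hU; move/unitarymxP: hU; by rewrite trmxCK.
Qed.

Lemma svd_sq (A : 'M[C]_d) s : singular_values A s ->
  \sum_i \sum_j (A i j)^* * A i j = ((\sum_j s j ^+ 2)%:C)%C.
Proof.
move=> [_ [_ [U [V [hU [hV ->]]]]]].
set D := diag_mx _.
set A0 := U *m D *m V.
transitivity (\tr (A0 *m A0^t*)).
  rewrite /mxtrace; apply: eq_bigr => i _; rewrite mxE; apply: eq_bigr => j _.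
  by rewrite !mxE mulrC.
rewrite /A0 !trmx_mul !map_mxM.
rewrite !mulmxA mulmxtVK // mxtrace_mulC !mulmxA unitary_tK // mul1mx.
exact: trDDt.
Qed.

Lemma unitary_diag_le1 (W : 'M[C]_d) i : W \is unitarymx -> `|W i i| <= 1.
Proof.
move=> /unitarymxP hW; have := congr1 (fun M : 'M[C]_d => M i i) hW; rewrite /= !mxE eqxx mulr1n => h.
have : W i i * (W i i)^* <= 1.
  rewrite -h (bigD1 i) //= !mxE lerDl; apply: sumr_ge0 => j _.
  by rewrite !mxE mul_conjC_ge0.
by rewrite -normCK expr_le1.
Qed.

Lemma svd_tr (A : 'M[C]_d) s : singular_values A s ->
  `|\tr A| <= ((\sum_j s j)%:C)%C.
Proof.
move=> [s0 [_ [U [V [hU [hV ->]]]]]].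
rewrite -mulmxA mxtrace_mulC -mulmxA.
have hW : V *m U \is unitarymx by apply: mul_unitarymx.
move: (V *m U) hW => W hW.
rewrite /mxtrace rmorph_sum; apply: le_trans (ler_norm_sum _ _ _) _.
apply: ler_sum => i _.
rewrite mul_diag_mx !mxE normrM.
have -> : `|((s i)%:C)%C| = ((s i)%:C)%C by apply/ger0_norm; rewrite ler0c.
rewrite -[X in _ <= X]mulr1; apply: ler_wpM2l; first by rewrite ler0c.
exact: unitary_diag_le1.
Qed.
End Mx.
Section Ineq.
Variable R : realType.

Lemma key_ineq (k th S Q b : R) : 1 <= k -> 0 <= th -> th < 1 -> 0 <= S -> 0 <= b ->
  k * b <= th * S -> S ^+ 2 <= k * Q ->
  (S + b) ^+ 2 * (k + th ^+ 2) <= (k + th) ^+ 2 * (Q + b ^+ 2).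
Proof.
move=> k1 th0 th1 S0 b0 hb hQ.
have id : (k + th) ^+ 2 * (S ^+ 2 + k * b ^+ 2) - k * (k + th ^+ 2) * (S + b) ^+ 2
  = (k - 1 + 2 * th) * (th * S - k * b) ^+ 2 + 2 * S * (k + th) * (1 - th) * (th * S - k * b).
  by ring.
have h1 : 0 <= (k - 1 + 2 * th) * (th * S - k * b) ^+ 2.
  by apply: mulr_ge0; [lra | apply: sqr_ge0].
have h2 : 0 <= 2 * S * (k + th) * (1 - th) * (th * S - k * b).
  by apply: mulr_ge0; [apply: mulr_ge0; [apply: mulr_ge0|]|]; try lra; apply: mulr_ge0; lra.
have h3 : k * ((S + b) ^+ 2 * (k + th ^+ 2)) <= k * ((k + th) ^+ 2 * (Q + b ^+ 2)).
  have : (k + th) ^+ 2 * (S ^+ 2 + k * b ^+ 2) <= (k + th) ^+ 2 * (k * Q + k * b ^+ 2).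
    by apply: ler_wpM2l; [apply: sqr_ge0| lra].
  have e1 : k * ((S + b) ^+ 2 * (k + th ^+ 2)) = k * (k + th ^+ 2) * (S + b) ^+ 2 by ring.
  have e2 : k * ((k + th) ^+ 2 * (Q + b ^+ 2)) = (k + th) ^+ 2 * (k * Q + k * b ^+ 2) by ring.
  rewrite e1 e2; lra.
by rewrite ler_pM2l in h3; lra.
Qed.

Variable d : nat.

Lemma cs_sum (P : pred 'I_d) (x : 'I_d -> R) :
  (\sum_(j | P j) x j) ^+ 2 <= (\sum_(j | P j) 1) * \sum_(j | P j) x j ^+ 2.
Proof.
have h : 0 <= \sum_(i | P i) \sum_(j | P j) (x i - x j) ^+ 2.
  by apply: sumr_ge0 => i _; apply: sumr_ge0 => j _; apply: sqr_ge0.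
have e : \sum_(i | P i) \sum_(j | P j) (x i - x j) ^+ 2 =
   2 * ((\sum_(j | P j) 1) * \sum_(j | P j) x j ^+ 2) - 2 * (\sum_(j | P j) x j) ^+ 2.
  have e1 : forall i j, (x i - x j) ^+ 2 = x i ^+ 2 * 1 + (1 * x j ^+ 2 - 2 * (x i * x j)).
    by move=> i j; ring.
  under eq_bigr => i _ do under eq_bigr => j _ do rewrite e1.
  under eq_bigr => i _ do rewrite big_split /= sumrB -!mulr_sumr.
  rewrite big_split /= sumrB -!mulr_suml -mulr_sumr -mulr_suml.
  ring.
lra.
Qed.


Lemma count_lt (k : nat) : (k <= d)%N -> \sum_(j < d | (j < k)%N) (1 : R) = k%:R.
Proof.
move=> kd; rewrite -(big_ord_widen d (fun _ => (1 : R))) //.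
by rewrite sumr_const card_ord.
Qed.

Lemma sv_bound (s : 'I_d -> R) (k : nat) (th : R) :
  (1 <= k)%N -> (k <= d)%N -> 0 <= th -> th < 1 ->
  (forall j, 0 <= s j) ->
  (forall j : 'I_d, (k < j)%N -> s j = 0) ->
  (forall j : 'I_d, nat_of_ord j = k -> k%:R * s j <= th * \sum_(i : 'I_d | (i < k)%N) s i) ->
  (\sum_j s j) ^+ 2 * (k%:R + th ^+ 2) <= (k%:R + th) ^+ 2 * \sum_j s j ^+ 2.
Proof.
move=> k1 kd th0 th1 s0 sgt sk.
have [b [hb1 [hb2 [hb0 hbk]]]] : exists b,
   \sum_(j : 'I_d | ~~ (j < k)%N) s j = b /\ \sum_(j : 'I_d | ~~ (j < k)%N) s j ^+ 2 = b ^+ 2 /\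
   0 <= b /\ k%:R * b <= th * \sum_(i : 'I_d | (i < k)%N) s i.
  case: (ltnP k d) => hkd.
    pose jk := Ordinal hkd.
    have hjk : ~~ (jk < k)%N by rewrite /= ltnn.
    exists (s jk); rewrite (bigD1 jk) //= (bigD1 jk hjk) /=.
    have z : forall F : 'I_d -> R, (forall j, s j = 0 -> F j = 0) ->
        \sum_(j : 'I_d | ~~ (j < k)%N && (j != jk)) F j = 0.
      move=> F hF; apply: big1 => j /andP[hj1 hj2]; apply: hF; apply: sgt.
      by rewrite ltn_neqAle leqNgt hj1 andbT; apply: contra hj2 => /eqP e; apply/eqP/val_inj => /=; rewrite e.
    rewrite (z (fun j => s j)) // (z (fun j => s j ^+ 2)); last by move=> j ->; rewrite expr0n.
    rewrite !addr0; split; [done| split; [done| split; [exact: s0| exact: sk]]].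
  have e : forall F : 'I_d -> R, \sum_(j : 'I_d | ~~ (j < k)%N) F j = 0.
    move=> F; apply: big1 => j; rewrite -leqNgt => hj.
    by have := leq_trans (ltn_ord j) (leq_trans hkd hj); rewrite ltnn.
  exists 0; rewrite !e expr0n /=; split => //; split => //; split => //.
  rewrite mulr0; apply: mulr_ge0 => //; apply: sumr_ge0 => i _; exact: s0.
rewrite (bigID (fun j : 'I_d => (j < k)%N)) /= (bigID (fun j : 'I_d => (j < k)%N) _ (fun j => s j ^+ 2)) /=.
rewrite hb1 hb2.
have kR : 1 <= k%:R :> R by rewrite ler1n.
apply: key_ineq => //.
- by apply: sumr_ge0 => i _; exact: s0.
- by have := cs_sum (fun j : 'I_d => (j < k)%N) s; rewrite count_lt.
Qed.

End Ineq.
Section Main.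
Variable R : realType.
Local Notation C := R[i].
Variable d : nat.

Lemma herm_Phi_t (t : R) : hermitian_preserving (@Phi_t R d t).
Proof.
move=> X; apply/matrixP => i j; rewrite /Phi_t !mxE /mxtrace.
rewrite rmorphB !rmorphM rmorph_sum rmorph_nat.
congr (_ * _ - _ * _).
- by apply: eq_bigr => l _; rewrite !mxE.
- by rewrite eq_sym.
- by have := @conj_realC R t.
Qed.


Lemma floor_le_d (alpha : R) : alpha <= d%:R -> (floor_nat alpha <= d)%N.
Proof. by move=> h; have := le_truncn h; rewrite natrK. Qed.

Lemma unit_sq (psi : 'I_d * 'I_d -> C) s :
  unit_vector psi -> singular_values (coef_mx psi) s -> \sum_j s j ^+ 2 = 1.
Proof.
move=> hu hs; have := @svd_sq _ _ _ _ hs.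
have -> : \sum_i \sum_j ((coef_mx psi) i j)^* * (coef_mx psi) i j = 1.
  rewrite -hu; transitivity (\sum_i \sum_j (psi (i, j))^* * psi (i, j)).
    by apply: eq_bigr => i _; apply: eq_bigr => j _; rewrite !mxE.
  rewrite (pair_bigA _ (fun i j => (psi (i, j))^* * psi (i, j))) /=.
  by apply: eq_bigr; case.
by move/complexI.
Qed.

Lemma tr_coef (psi : 'I_d * 'I_d -> C) : \tr (coef_mx psi) = \sum_i psi (i, i).
Proof. by apply: eq_bigr => i _; rewrite mxE. Qed.

Lemma inP_suff (alpha t : R) : 1 <= alpha -> alpha <= d%:R -> t <= tstar alpha ->
  in_P alpha (@Phi_t R d t).
Proof.
move=> a1 ad ht; split; first exact: herm_Phi_t.
move=> psi [hu [s [hsv [hr hk]]]].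
rewrite choi_form_Phi_t hu.
have hsq := @unit_sq _ _ hu hsv.
have htr := @svd_tr _ _ _ _ hsv; rewrite tr_coef in htr.
set T := \sum_i psi (i, i) in htr *.
set S := \sum_j s j in htr.
have s0 : forall j, 0 <= s j by case: hsv.
have S0 : 0 <= S by apply: sumr_ge0.
have a0 : 0 <= alpha by lra.
have [th0 th1] : 0 <= frac_part alpha /\ frac_part alpha < 1 by apply/andP; apply: (@frac_itv _ _ a0).
have k1 := @floor_ge1 _ _ a1.
have kd := floor_le_d _ ad.
have hb : S ^+ 2 * ((floor_nat alpha)%:R + frac_part alpha ^+ 2) <=
          ((floor_nat alpha)%:R + frac_part alpha) ^+ 2 * \sum_j s j ^+ 2.
  apply: sv_bound => //.
  - move=> j hj; apply: hr; rewrite /ceil_nat; case: ifP => _ //.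
    exact: ltnW.
  - move=> j hj; case: (ltrP 0 (frac_part alpha)) => hth.
      have := hk hth j hj; rewrite -(ler_pM2l (x := (floor_nat alpha)%:R)) ?ltr0n //.
      move=> h; apply: le_trans h _; rewrite mulrA mulrCA divff ?mulr1 //.
      by rewrite pnatr_eq0 -lt0n.
    have e : frac_part alpha = 0 by apply/eqP; rewrite eq_le hth th0.
    rewrite hr ?mulr0 ?e ?mul0r //.
    by rewrite /ceil_nat e ltxx hj.
rewrite hsq mulr1 in hb.
have hts : tstar alpha * S ^+ 2 <= 1.
  rewrite /tstar mulrAC ler_pdivrMr ?mul1r.
    by rewrite mulrC.
  apply: exprn_gt0; have : 1 <= ((floor_nat alpha)%:R : R) by rewrite ler1n.
  lra.
rewrite -normCKC subr_ge0.
case: (lerP t 0) => t0.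
  apply: (le_trans (y := 0)); last exact: ler01.
  apply: mulr_le0_ge0; last exact: exprn_ge0.
  by rewrite -[0 : C]/(((0 : R)%:C)%C) lecR.
have n0 : 0 <= `|T| by [].
apply: (le_trans (y := ((t * S ^+ 2)%:C)%C)); last first.
  rewrite -[1 : C]/(((1 : R)%:C)%C) lecR.
  apply: le_trans hts; apply: ler_wpM2r; [exact: exprn_ge0| done].
rewrite rmorphM rmorphXn /=.
apply: ler_wpM2l; first by rewrite ler0c; lra.
by apply: lerXn2r => //; rewrite ?nnegrE ?ler0c.
Qed.

End Main.
Section Nec.
Variable R : realType.
Local Notation C := R[i].
Variable d : nat.

Lemma sum_ge_k (f : nat -> R) (k : nat) : (forall i, (k < i)%N -> f i = 0) ->
  \sum_(i : 'I_d | ~~ (i < k)%N) f i = (k < d)%:R * f k.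
Proof.
move=> hf; case: (ltnP k d) => hkd.
  pose jk := Ordinal hkd.
  have hjk : ~~ (jk < k)%N by rewrite /= ltnn.
  rewrite (bigD1 jk) //= big1 ?addr0 ?mul1r //.
  move=> j /andP[hj1 hj2]; apply: hf.
  by rewrite ltn_neqAle leqNgt hj1 andbT; apply: contra hj2 => /eqP e; apply/eqP/val_inj => /=; rewrite e.
rewrite mul0r; apply: big1 => j; rewrite -leqNgt => hj.
by have := leq_trans (ltn_ord j) (leq_trans hkd hj); rewrite ltnn.
Qed.

Lemma sum_lt_k (x : R) (k : nat) : (k <= d)%N ->
  \sum_(i : 'I_d | (i < k)%N) x = k%:R * x.
Proof.
move=> kd; rewrite -[X in X * x](@count_lt R d k kd) mulr_suml.
by apply: eq_bigr => i _; rewrite mul1r.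
Qed.

Lemma sum_split (f : nat -> R) (k : nat) : (k <= d)%N ->
  (forall i, (k < i)%N -> f i = 0) ->
  (forall i, (i < k)%N -> f i = f 0%N) ->
  \sum_(i : 'I_d) f i = k%:R * f 0%N + (k < d)%:R * f k.
Proof.
move=> kd h1 h2; rewrite (bigID (fun i : 'I_d => (i < k)%N)) /= sum_ge_k //.
rewrite -(sum_lt_k (f 0%N) k kd); congr (_ + _).
by apply: eq_bigr => i hi; rewrite h2.
Qed.


Lemma sq_helper (k th : R) : k + th ^+ 2 != 0 ->
  k * (1 / (k + th ^+ 2)) + th * th * (1 / (k + th ^+ 2)) = 1.
Proof. by move=> h; field. Qed.

Lemma inP_nec (alpha t : R) : 1 <= alpha -> alpha <= d%:R ->
  in_P alpha (@Phi_t R d t) -> t <= tstar alpha.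
Proof.
move=> a1 ad [_ hP].
rewrite leNgt; apply/negP => hlt.
have a0 : 0 <= alpha by lra.
have [th0 th1] : 0 <= frac_part alpha /\ frac_part alpha < 1 by apply/andP; apply: (@frac_itv _ _ a0).
have k1 := @floor_ge1 _ _ a1.
have kd := @floor_le_d R d _ ad.
have afe := @fracE R alpha.
rewrite /tstar in hlt.
set k := floor_nat alpha in k1 kd afe hlt *.
set th := frac_part alpha in th0 th1 afe hlt *.
have kR : 1 <= k%:R :> R by rewrite ler1n.
have hkd : (k < d)%:R * th = th.
  case: (ltnP k d) => h; first by rewrite mul1r.
  have e : k = d by apply/eqP; rewrite eqn_leq kd h.
  rewrite mul0r; move: afe; rewrite e => afe; lra.
set q := k%:R + th ^+ 2.
have q0 : 0 < q by rewrite /q; have := sqr_ge0 th; lra.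
set a := Num.sqrt (1 / q).
have a0' : 0 <= a by apply: sqrtr_ge0.
have ha : a ^+ 2 = 1 / q by rewrite sqr_sqrtr // divr_ge0 // ltW.
pose c := fun i : nat => if (i < k)%N then a else if i == k then th * a else 0.
have c0 : forall i, 0 <= c i.
  by move=> i; rewrite /c; case: ifP => _ //; case: ifP => _ //; apply: mulr_ge0.
have cgt : forall i, (k < i)%N -> c i = 0.
  move=> i hi; rewrite /c ltnNge (ltnW hi) /=; case: eqP => // e; subst i.
  by rewrite ltnn in hi.
have clt : forall i, (i < k)%N -> c i = c 0%N.
  by move=> i hi; rewrite /c hi k1.
have c00 : c 0%N = a by rewrite /c k1.
have ck : c k = th * a by rewrite /c ltnn eqxx.
pose psi := fun p : 'I_d * 'I_d => if p.1 == p.2 then ((c p.1)%:C)%C else 0.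
have sum_c : \sum_(i : 'I_d) c i = (k%:R + th) * a.
  rewrite (sum_split (fun i => c i) k kd cgt clt) c00 ck mulrA hkd; ring.
have sum_c2 : \sum_(i : 'I_d) c i ^+ 2 = 1.
  rewrite (sum_split (fun i => c i ^+ 2) k kd); first last.
  - by move=> i hi; rewrite clt.
  - by move=> i hi; rewrite cgt // expr0n.
  rewrite c00 ck.
  have -> : (k < d)%:R * (th * a) ^+ 2 = ((k < d)%:R * th) * th * a ^+ 2 by ring.
  rewrite hkd ha /q; apply: sq_helper; rewrite -/q; exact: lt0r_neq0.
have hdiag : \sum_i psi (i, i) = ((((k%:R + th) * a)%:C)%C).
  by rewrite -sum_c rmorph_sum; apply: eq_bigr => i _; rewrite /psi /= eqxx.
have hunit : \sum_p (psi p)^* * psi p = 1.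
  transitivity (\sum_i \sum_j (psi (i, j))^* * psi (i, j)).
    by rewrite (pair_bigA _ (fun i j => (psi (i, j))^* * psi (i, j))) /=; apply: eq_bigr; case.
  transitivity (\sum_(i : 'I_d) (((c i ^+ 2)%:C)%C)); last first.
    by rewrite -rmorph_sum sum_c2.
  apply: eq_bigr => i _; rewrite (bigD1 i) //= big1 ?addr0.
    by rewrite /psi /= eqxx conj_realC -rmorphM expr2.
  by move=> j; rewrite /psi /= eq_sym => /negbTE ->; rewrite mulr0.
have cmono : forall i j, (i <= j)%N -> c j <= c i.
  move=> i j hij; case: (ltnP j k) => hjk.
    by rewrite (clt j hjk) (clt i (leq_ltn_trans hij hjk)).
  case: (ltnP k j) => hkj.
    by rewrite cgt // c0.
  have ej : j = k by apply/eqP; rewrite eqn_leq hkj hjk.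
  rewrite ej ck; case: (ltnP i k) => hik.
    rewrite (clt i hik) c00; nra.
  have ei : i = k by apply/eqP; rewrite eqn_leq hik -ej hij.
  by rewrite ei ck.
have adm : admissible alpha psi.
  rewrite /admissible -/k -/th.
  split; first exact: hunit.
  exists (fun j : 'I_d => c j); split; [|split].
  - split; first by move=> j; exact: c0.
    split; first by move=> i j hij; exact: cmono.
    have u1 : (1%:M : 'M[C]_d) \is unitarymx.
      by apply/unitarymxP; rewrite trmx1 map_mx1 mulmx1.
    exists 1%:M, 1%:M; split; [exact: u1| split; [exact: u1|]].
    rewrite mul1mx mulmx1; apply/matrixP => i j; rewrite !mxE /psi /=.
    by case: eqP => [->|_]; rewrite ?mulr1n ?mulr0n.
  - move=> j; rewrite /ceil_nat -/k -/th; case: ifP => hth hj.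
      by apply: cgt.
    case: (ltnP k j) => hkj; first exact: cgt.
    have ej : nat_of_ord j = k by apply/eqP; rewrite eqn_leq hkj hj.
    rewrite ej ck.
    have -> : th = 0 by apply/eqP; rewrite eq_le th0 andbT leNgt hth.
    by rewrite mul0r.
  - move=> hth j hj; rewrite hj ck.
    have -> : \sum_(i : 'I_d | (i < k)%N) c i = \sum_(i : 'I_d | (i < k)%N) a.
      by apply: eq_bigr => i hi; rewrite /c hi.
    rewrite sum_lt_k // mulrA divfK //; by rewrite pnatr_eq0 -lt0n.
have := hP psi adm.
rewrite choi_form_Phi_t hunit hdiag conj_realC -rmorphM -rmorphM.
rewrite -[1 : C]/(((1 : R)%:C)%C) -rmorphB /= ler0c => h.
have kth : 0 < k%:R + th by lra.
have e1 : (k%:R + th) * a * ((k%:R + th) * a) = (k%:R + th) ^+ 2 * a ^+ 2 by ring.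
rewrite e1 ha mulrA mul1r in h.
rewrite ltr_pdivrMr in hlt; last by apply: exprn_gt0.
have : 1 < t * (k%:R + th) ^+ 2 / q by rewrite ltr_pdivlMr // mul1r.
lra.
Qed.

End Nec.
Section CP.
Variable R : realType.
Local Notation C := R[i].
Variable d : nat.
Variable n : nat.
Variable X : 'I_n -> 'I_n -> 'M[C]_d.

Lemma formE (v w : 'cV[C]_d) (M : 'M[C]_d) :
  ((v ^t* *m M *m w) 0 0) = \sum_a \sum_b (v a 0)^* * M a b * w b 0.
Proof.
rewrite mxE exchange_big /=; apply: eq_bigr => b _; rewrite mxE mulr_suml.
by apply: eq_bigr => a _; rewrite !mxE.
Qed.

Definition Hf (c c' : 'I_n -> 'I_d -> C) :=
  \sum_p \sum_q \sum_a \sum_b (c p a)^* * X p q a b * c' q b.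

Lemma Hf_sub (c c' : 'I_n -> 'I_d -> C) :
  Hf (fun p a => c p a - c' p a) (fun p a => c p a - c' p a) =
  Hf c c - Hf c c' - Hf c' c + Hf c' c'.
Proof.
rewrite /Hf -!sumrB -!big_split /=; apply: eq_bigr => p _.
rewrite -!sumrB -!big_split /=; apply: eq_bigr => q _.
rewrite -!sumrB -!big_split /=; apply: eq_bigr => a _.
rewrite -!sumrB -!big_split /=; apply: eq_bigr => b _.
rewrite rmorphB /=; ring.
Qed.

Lemma collapse2 (M : 'M[C]_d) (m m' : 'I_d) (x y : C) :
  \sum_a \sum_b ((a == m)%:R * x)^* * M a b * ((b == m')%:R * y) = x^* * M m m' * y.
Proof.
transitivity (\sum_b ((m == m)%:R * x)^* * M m b * ((b == m')%:R * y)).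
  rewrite (bigD1 m) //= addrC big1 ?add0r // => a /negbTE ha.
  by apply: big1 => b _; rewrite ha mul0r rmorph0 !mul0r.
rewrite (bigD1 m') //= addrC big1 ?add0r; first by rewrite !eqxx !mul1r.
by move=> b /negbTE ->; rewrite mul0r mulr0.
Qed.


Lemma sum4_swap (F : 'I_d -> 'I_d -> 'I_n -> 'I_n -> C) :
  \sum_l \sum_m \sum_p \sum_q F l m p q = \sum_p \sum_q \sum_l \sum_m F l m p q.
Proof.
under eq_bigr => l _ do rewrite exchange_big.
under eq_bigr => l _ do under eq_bigr => p _ do rewrite exchange_big.
rewrite exchange_big; apply: eq_bigr => p _; by rewrite exchange_big.
Qed.

Definition wv (cu : 'I_n -> 'I_d -> C) (l m : 'I_d) := fun p a => (a == m)%:R * cu p l.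

Lemma Hf_wv (cu : 'I_n -> 'I_d -> C) l m l' m' :
  Hf (wv cu l m) (wv cu l' m') = \sum_p \sum_q (cu p l)^* * X p q m m' * cu q l'.
Proof. by apply: eq_bigr => p _; apply: eq_bigr => q _; rewrite /wv collapse2. Qed.

Lemma cp_core (t : R) : (0 < d)%N -> t * d%:R <= 1 -> psd_block X ->
  psd_block (fun p q => @Phi_t R d t (X p q)).
Proof.
move=> hd ht hX u.
have hG : forall c, 0 <= Hf c c.
  move=> c; have := hX (fun p => \col_a c p a).
  congr (_ <= _); apply: eq_bigr => p _; apply: eq_bigr => q _; rewrite formE.
  by apply: eq_bigr => a _; apply: eq_bigr => b _; rewrite !mxE.
pose cu := fun p a => u p a 0.
have e1 : forall p q, ((u p)^t* *m @Phi_t R d t (X p q) *m u q) 0 0 =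
   \sum_l \sum_m (cu p l)^* * X p q m m * cu q l -
   (t%:C)%C * \sum_a \sum_b (cu p a)^* * X p q a b * cu q b.
  move=> p q; rewrite formE.
  under eq_bigr => a _ do under eq_bigr => b _ do rewrite !mxE mulrBr mulrBl.
  under eq_bigr => a _ do rewrite sumrB.
  rewrite sumrB mulr_sumr; congr (_ - _).
    apply: eq_bigr => a _; rewrite (bigD1 a) //= big1 ?addr0.
      rewrite eqxx mulr1 /mxtrace mulr_sumr mulr_suml; apply: eq_bigr => m _.
      by rewrite /cu; ring.
    move=> b; rewrite eq_sym => /negbTE ->.
    by rewrite mulr0 mulr0 mul0r.
  apply: eq_bigr => a _; rewrite mulr_sumr; apply: eq_bigr => b _.
  by rewrite /cu; ring.
under eq_bigr => p _ do under eq_bigr => q _ do rewrite e1.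
under eq_bigr => p _ do rewrite sumrB.
rewrite sumrB.
under [X in _ - X]eq_bigr => p _ do rewrite -mulr_sumr.
rewrite -mulr_sumr.
have -> : \sum_p \sum_q \sum_a \sum_b (cu p a)^* * X p q a b * cu q b = Hf cu cu by [].
set W := \sum_p \sum_q \sum_l \sum_m _.
have hW : W = \sum_l \sum_m Hf (wv cu l m) (wv cu l m).
  by under eq_bigr => l _ do under eq_bigr => m _ do rewrite Hf_wv; rewrite sum4_swap.
have hV : \sum_l \sum_l' Hf (wv cu l l) (wv cu l' l') = Hf cu cu.
  by under eq_bigr => l _ do under eq_bigr => m _ do rewrite Hf_wv; rewrite sum4_swap.
have hV' : \sum_l \sum_l' Hf (wv cu l' l') (wv cu l l) = Hf cu cu.
  by rewrite exchange_big.
set Gv := \sum_l Hf (wv cu l l) (wv cu l l).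
have Gv0 : 0 <= Gv by apply: sumr_ge0 => l _; apply: hG.
have hsc : forall l : 'I_d, \sum_(l' : 'I_d) Hf (wv cu l l) (wv cu l l) = d%:R * Hf (wv cu l l) (wv cu l l).
  by move=> l; rewrite sumr_const card_ord mulr_natl.
have key : Hf cu cu <= d%:R * Gv.
  have h0 : 0 <= \sum_l \sum_l' Hf (fun p a => wv cu l l p a - wv cu l' l' p a)
                                  (fun p a => wv cu l l p a - wv cu l' l' p a).
    by apply: sumr_ge0 => l _; apply: sumr_ge0 => l' _; apply: hG.
  move: h0; under eq_bigr => l _ do under eq_bigr => l' _ do rewrite Hf_sub.
  under eq_bigr => l _ do rewrite big_split /= !sumrB.
  rewrite big_split /= !sumrB hV hV'.
  have hS : \sum_l \sum_(l' : 'I_d) Hf (wv cu l l) (wv cu l l) = d%:R * Gv.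
    by under eq_bigr => l _ do rewrite hsc; rewrite -mulr_sumr.
  rewrite [X in _ + X]exchange_big /= hS.
  have -> : d%:R * Gv - Hf cu cu - Hf cu cu + d%:R * Gv = 2 * (d%:R * Gv - Hf cu cu) by ring.
  by rewrite pmulr_rge0 ?ltr0n // subr_ge0.
have Wv : Gv <= W.
  rewrite hW; apply: ler_sum => l _; rewrite (bigD1 l) //= lerDl.
  by apply: sumr_ge0 => m _; apply: hG.
rewrite subr_ge0.
case: (lerP t 0) => t0.
  apply: (le_trans (y := 0)); last exact: le_trans Wv.
  apply: mulr_le0_ge0; last exact: hG.
  by rewrite -[0 : C]/(((0 : R)%:C)%C) lecR.
apply: (le_trans (y := (t%:C)%C * (d%:R * Gv))).
  by apply: ler_wpM2l => //; rewrite ler0c ltW.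
rewrite mulrA; apply: (le_trans (y := 1 * Gv)); last by rewrite mul1r.
apply: ler_wpM2r => //.
by rewrite -(rmorph_nat (real_complex R)) -rmorphM -[1 : C]/(((1 : R)%:C)%C) lecR.
Qed.

End CP.
Section Theta.
Variable R : realType.

Definition Qk (k : nat) (t th : R) :=
  (t - 1) * th ^+ 2 + 2%:R * t * k%:R * th + (t * k%:R ^+ 2 - k%:R).

Lemma tk1 (k : nat) (t : R) : 1 / k.+1%:R < t -> 1 < t * k.+1%:R.
Proof. by rewrite ltr_pdivrMr ?ltr0n. Qed.

Lemma tk2 (k : nat) (t : R) : (1 <= k)%N -> t <= 1 / k%:R -> t * k%:R <= 1.
Proof. by move=> k1; rewrite ler_pdivlMr ?ltr0n. Qed.

Lemma theta_props (k : nat) (t : R) : (1 <= k)%N -> 1 / k.+1%:R < t ->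
  t <= 1 / k%:R -> t < 1 ->
  let th := (t * k%:R - Num.sqrt (k%:R * (t * k.+1%:R - 1))) / (1 - t) in
  (0 <= th < 1) /\ Qk k t th = 0.
Proof.
move=> k1 h1 h2 h3.
have u1 := @tk1 k t h1; have u2 := @tk2 k t k1 h2.
have kR : 1 <= k%:R :> R by rewrite ler1n.
rewrite -natr1 in u1 *.
set D := k%:R * (t * (k%:R + 1) - 1).
have D0 : 0 <= D by rewrite /D; apply: mulr_ge0; lra.
set sq := Num.sqrt D.
have sq0 : 0 <= sq by apply: sqrtr_ge0.
have sqE : sq ^+ 2 = D by rewrite sqr_sqrtr.
have t0 : 0 < 1 - t by lra.
have tk0 : 0 <= t * k%:R by apply: mulr_ge0; lra.
have hD1 : D <= (t * k%:R) ^+ 2.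
  rewrite -subr_ge0.
  have -> : (t * k%:R) ^+ 2 - D = k%:R * ((1 - t) * (1 - t * k%:R)) by rewrite /D; ring.
  by apply: mulr_ge0; [lra| apply: mulr_ge0; lra].
have hD2 : (t * (k%:R + 1) - 1) ^+ 2 < D.
  rewrite /D -subr_gt0.
  have -> : k%:R * (t * (k%:R + 1) - 1) - (t * (k%:R + 1) - 1) ^+ 2 =
     (t * (k%:R + 1) - 1) * ((k%:R + 1) * (1 - t)) by ring.
  by apply: mulr_gt0; [lra| apply: mulr_gt0; lra].
rewrite -sqE in hD1 hD2.
have s1 : sq <= t * k%:R by nra.
have s2 : t * (k%:R + 1) - 1 < sq by nra.
move=> th; split.
  apply/andP; split.
    by apply: divr_ge0; lra.
  by rewrite ltr_pdivrMr // mul1r; lra.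
have ex : th * (1 - t) = t * k%:R - sq by rewrite /th divfK //; lra.
have e : (1 - t) * Qk k t th =
   - (th * (1 - t)) ^+ 2 + 2 * t * k%:R * (th * (1 - t)) + (1 - t) * (t * k%:R ^+ 2 - k%:R).
  by rewrite /Qk; ring.
rewrite ex in e.
have e2 : - (t * k%:R - sq) ^+ 2 + 2 * t * k%:R * (t * k%:R - sq) +
      (1 - t) * (t * k%:R ^+ 2 - k%:R) = (t * k%:R) ^+ 2 - sq ^+ 2 + (1 - t) * (t * k%:R ^+ 2 - k%:R).
  by ring.
rewrite e2 sqE /D in e.
have e3 : (t * k%:R) ^+ 2 - k%:R * (t * (k%:R + 1) - 1) + (1 - t) * (t * k%:R ^+ 2 - k%:R) = 0.
  by ring.
rewrite e3 in e.
by move/eqP: e; rewrite mulf_eq0 => /orP[/eqP|/eqP] //; lra.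
Qed.


Lemma theta_uniq (k : nat) (t a b : R) : 1 / k.+1%:R < t -> t < 1 ->
  0 <= a < 1 -> 0 <= b < 1 -> Qk k t a = 0 -> Qk k t b = 0 -> a = b.
Proof.
move=> h1 h3 /andP[a0 a1] /andP[b0 b1] qa qb.
have u1 := @tk1 k t h1; rewrite -natr1 in u1.
have e : Qk k t a - Qk k t b = (a - b) * ((t - 1) * (a + b) + 2 * t * k%:R) by rewrite /Qk; ring.
rewrite qa qb subrr in e.
have pos : 0 < (t - 1) * (a + b) + 2 * t * k%:R by nra.
move/esym/eqP: e; rewrite mulf_eq0 => /orP[/eqP|/eqP]; lra.
Qed.

Lemma tstar_root (k : nat) (t th : R) : (1 <= k)%N -> 0 <= th < 1 -> Qk k t th = 0 ->
  tstar (k%:R + th) = t.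
Proof.
move=> k1 hth q; rewrite tstar_kth //.
have kR : 1 <= k%:R :> R by rewrite ler1n.
case/andP: hth => h0 h1.
have e : k%:R + th ^+ 2 = t * (k%:R + th) ^+ 2.
  have e' : k%:R + th ^+ 2 - t * (k%:R + th) ^+ 2 = - Qk k t th by rewrite /Qk; ring.
  by rewrite q oppr0 in e'; apply/eqP; rewrite -subr_eq0 e'.
rewrite e mulfK //; apply: expf_neq0; lra.
Qed.

End Theta.
Section TauS.
Variable R : realType.
Variable d : nat.

Lemma tau_eq (t m : R) : 1 <= m -> m <= d%:R -> t <= tstar m ->
  (forall a, 1 <= a -> a <= d%:R -> t <= tstar a -> a <= m) ->
  tau (@Phi_t R d t) = m.
Proof.
move=> m1 md hm hub; rewrite /tau.
match goal with |- sup ?X = _ => set E := X end.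
have Em : E m by split; [apply/andP; split| apply: inP_suff].
have ubm : ubound E m.
  move=> a [/andP[a1 ad] hP]; apply: hub => //; exact: (inP_nec _ _ _ _ a1 ad hP).
apply/le_anti/andP; split.
  by apply: ge_sup => //; exists m.
have hE : has_ubound E by exists m.
exact: (ub_le_sup hE Em).
Qed.

Lemma cp_Phi_t (t : R) : (0 < d)%N -> t * d%:R <= 1 -> completely_positive (@Phi_t R d t).
Proof. by move=> hd ht n X hX; apply: cp_core. Qed.

End TauS.
Local Close Scope sesquilinear_scope.

Theorem corollary4p9 (R : realType) (d : nat) : (2 <= d)%N ->
  (* (i) *)
  (forall t : R, t <= 0 ->
     completely_positive (@Phi_t R d t) /\ tau (@Phi_t R d t) = d%:R) /\
  (* (ii) *)
  (forall t : R, 0 < t -> t <= 1 / d%:R ->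
     completely_positive (@Phi_t R d t) /\ tau (@Phi_t R d t) = d%:R) /\
  (* (iii) *)
  (forall t : R, 1 / d%:R < t -> t < 1 ->
     (exists alpha : R,
        [/\ 1 < alpha < d%:R, t = tstar alpha,
            (forall beta : R, 1 < beta < d%:R -> t = tstar beta -> beta = alpha)
          & tau (@Phi_t R d t) = alpha]) /\
     (forall k : nat, (1 <= k <= d.-1)%N ->
        1 / k.+1%:R < t -> t <= 1 / k%:R ->
        exists theta : R,
          (0 <= theta < 1) /\
              (t - 1) * theta ^+ 2 + 2%:R * t * k%:R * theta
                + (t * k%:R ^+ 2 - k%:R) = 0 /\
              (forall theta' : R, 0 <= theta' < 1 ->
                 (t - 1) * theta' ^+ 2 + 2%:R * t * k%:R * theta'
                   + (t * k%:R ^+ 2 - k%:R) = 0 -> theta' = theta) /\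
              tau (@Phi_t R d t) = k%:R + theta /\
              (t < 1 / k%:R ->
                 theta = (t * k%:R - Num.sqrt (k%:R * (t * k.+1%:R - 1))) / (1 - t)) /\
              (t = 1 / k%:R -> theta = 0 /\ tau (@Phi_t R d t) = k%:R))) /\
  (* (iv) *)
  tau (@Phi_t R d 1) = 1.
Proof.
move=> d2.
have d0 : (0 < d)%N by apply: leq_trans d2.
have dR : 2 <= d%:R :> R by rewrite ler_nat.
have d1 : (1 <= d)%N by [].
have tsd : tstar (d%:R : R) = 1 / d%:R by apply: tstar_nat.
have invd : 0 < 1 / d%:R :> R by rewrite divr_gt0 ?ltr0n.
have dub : forall a : R, 1 <= a -> a <= d%:R -> a <= d%:R by [].
have taud : forall t : R, t <= 1 / d%:R -> tau (@Phi_t R d t) = d%:R.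
  move=> t ht; apply: tau_eq => //; first by lra.
  by rewrite tsd.
have cpd : forall t : R, t <= 1 / d%:R -> completely_positive (@Phi_t R d t).
  move=> t ht; apply: cp_Phi_t => //.
  by move: ht; rewrite ler_pdivlMr ?ltr0n.
split; first by move=> t t0; split; [apply: cpd; lra| apply: taud; lra].
split; first by move=> t t0 ht; split; [apply: cpd| apply: taud].
split; last first.
  apply: tau_eq => //; first by lra.
  - by rewrite tstar1.
  - move=> a a1 ad ha; rewrite leNgt; apply/negP => lt.
    by have := tstar_lt _ _ _ (lexx 1) lt; rewrite tstar1; lra.
move=> t h1 h3.
have t0 : 0 < t by lra.
have main : forall k : nat, (1 <= k <= d.-1)%N -> 1 / k.+1%:R < t -> t <= 1 / k%:R ->
    exists theta : R,
          (0 <= theta < 1) /\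
              (t - 1) * theta ^+ 2 + 2%:R * t * k%:R * theta
                + (t * k%:R ^+ 2 - k%:R) = 0 /\
              (forall theta' : R, 0 <= theta' < 1 ->
                 (t - 1) * theta' ^+ 2 + 2%:R * t * k%:R * theta'
                   + (t * k%:R ^+ 2 - k%:R) = 0 -> theta' = theta) /\
              tau (@Phi_t R d t) = k%:R + theta /\
              (t < 1 / k%:R ->
                 theta = (t * k%:R - Num.sqrt (k%:R * (t * k.+1%:R - 1))) / (1 - t)) /\
              (t = 1 / k%:R -> theta = 0 /\ tau (@Phi_t R d t) = k%:R).
  move=> k /andP[k1 kd] hk1 hk2.
  have [hth hq] := @theta_props R k t k1 hk1 hk2 h3.
  set th := (t * k%:R - _) / (1 - t) in hth hq *.
  have kR : 1 <= k%:R :> R by rewrite ler1n.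
  have kdR : k%:R + 1 <= d%:R :> R.
    by rewrite natr1 ler_nat -(prednK d0) ltnS.
  have uq : forall th' : R, 0 <= th' < 1 -> @Qk R k t th' = 0 -> th' = th.
    by move=> th' h' q'; apply: (@theta_uniq R k t th' th hk1 h3 h' hth q' hq).
  have ts : tstar (k%:R + th) = t := @tstar_root R k t th k1 hth hq.
  have htau : tau (@Phi_t R d t) = k%:R + th.
    case/andP: hth => th0 th1.
    apply: tau_eq; [lra| lra| by rewrite ts|].
    move=> a a1 ad ha; rewrite leNgt; apply/negP => lt.
    have m1 : 1 <= k%:R + th by lra.
    have := tstar_lt _ _ _ m1 lt; rewrite ts; lra.
  exists th; split => //; split => //; split => //; split => //; split => //.
  move=> e; have z : 0 = th.
    apply: uq; first by rewrite lexx ltr01.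
    rewrite /Qk e; have : k%:R != 0 :> R by rewrite pnatr_eq0 -lt0n.
    by move=> nz; field.
  by rewrite -z addr0 in htau *.
split => //.
set k := floor_nat (1 / t).
have it0 : 0 <= 1 / t by apply: divr_ge0; lra.
have [ik1 ik2] : k%:R <= 1 / t /\ 1 / t < k.+1%:R by apply/andP; apply: truncn_itv.
have k1 : (1 <= k)%N.
  rewrite /k /floor_nat truncn_gt0 ler_pdivlMr //; lra.
have kd : (k <= d.-1)%N.
  rewrite /k /floor_nat truncn_le_nat prednK // ltr_pdivrMr //.
  by move: h1; rewrite ltr_pdivrMr ?ltr0n // mulrC.
have hk1 : 1 / k.+1%:R < t.
  by rewrite ltr_pdivrMr ?ltr0n //; move: ik2; rewrite ltr_pdivrMr // mulrC.
have hk2 : t <= 1 / k%:R.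
  by rewrite ler_pdivlMr ?ltr0n //; move: ik1; rewrite ler_pdivlMr // mulrC.
have [th [hth [hq [uq [htau _]]]]] := main k (introT andP (conj k1 kd)) hk1 hk2.
have kR : 1 <= k%:R :> R by rewrite ler1n.
have kdR : k%:R + 1 <= d%:R :> R.
  by rewrite natr1 ler_nat -(prednK d0) ltnS.
have ts : tstar (k%:R + th) = t := @tstar_root R k t th k1 hth hq.
case/andP: hth => th0 th1.
have a1 : 1 < k%:R + th.
  rewrite lt_neqAle; apply/andP; split; last by lra.
  apply/negP => /eqP e; move: ts; rewrite -e tstar1; lra.
exists (k%:R + th); split => //.
- by apply/andP; split; lra.
- move=> b /andP[b1 b2] tb.
  case: (ltgtP b (k%:R + th)) => // hb.
    by have := tstar_lt _ _ _ (ltW b1) hb; lra.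
  by have := tstar_lt _ _ _ (ltW a1) hb; lra.
Qed.
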